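(* Let $p$ be an odd prime, $D=\mathbb{Z}_{(p)}$, and $A=D\oplus D\mathbf{i}\oplus D\mathbf{j}\oplus D\mathbf{k}$ with $\mathbf{i}^2=\mathbf{j}^2=-1$, $\mathbf{i}\mathbf{j}=\mathbf{k}=-\mathbf{j}\mathbf{i}$. Then $\textnormal{Int}_{\mathbb{Q}}(A)=\textnormal{Int}_{\mathbb{Q}}(M_2(D))$, but $A\not\cong M_2(D)$.
   Context: $\textnormal{Int}_{\mathbb{Q}}(A)=\{f\in\mathbb{Q}[X]\mid f(A)\subseteq A\}$ with evaluation in $\mathbb{Q}\otimes_D A$; similarly for $M_2(D)$, the $2\times 2$ matrices over $D$. *)

(* Defs.v *)
From HB Require Import structures.
From mathcomp Require Import all_boot all_order all_algebra.
Set Implicit Arguments. Unset Strict Implicit. Unset Printing Implicit Defensive.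
Import Order.TTheory GRing.Theory Num.Theory.
Local Open Scope ring_scope.

Definition inZloc (p : nat) (x : rat) : bool := ~~ (p%:Z %| denq x)%Z.

(* Q (x)_D A = Hamilton quaternions over Q: a + b i + c j + d k. *)
Record quat := Quat { qa : rat; qb : rat; qc : rat; qd : rat }.

Definition qadd (x y : quat) : quat :=
  Quat (qa x + qa y) (qb x + qb y) (qc x + qc y) (qd x + qd y).

(* i^2 = j^2 = -1, ij = k = -ji (hence k^2 = -1, jk = i, ki = j). *)
Definition qmul (x y : quat) : quat :=
  Quat (qa x * qa y - qb x * qb y - qc x * qc y - qd x * qd y)
       (qa x * qb y + qb x * qa y + qc x * qd y - qd x * qc y)
       (qa x * qc y - qb x * qd y + qc x * qa y + qd x * qb y)
       (qa x * qd y + qb x * qc y - qc x * qb y + qd x * qa y).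

Definition qconst (c : rat) : quat := Quat c 0 0 0.
Definition qzero : quat := qconst 0.
Definition qone : quat := qconst 1.

Definition qeval (f : {poly rat}) (q : quat) : quat :=
  foldr (fun c acc => qadd (qmul acc q) (qconst c)) qzero (polyseq f).

Definition inA (p : nat) (q : quat) : bool :=
  [&& inZloc p (qa q), inZloc p (qb q), inZloc p (qc q) & inZloc p (qd q)].

Definition inM2D (p : nat) (M : 'M[rat]_2) : bool :=
  [forall i, forall j, inZloc p (M i j)].

Definition IntQ_A (p : nat) (f : {poly rat}) : Prop :=
  forall q, inA p q -> inA p (qeval f q).

Definition IntQ_M2D (p : nat) (f : {poly rat}) : Prop :=
  forall M : 'M[rat]_2, inM2D p M -> inM2D p (horner_mx M f).

(* A ring isomorphism A -> M_2(D) (a ring iso between D-algebras is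
   automatically D-linear since D is a localization of Z). *)
Definition A_M2D_ring_iso (p : nat) (phi : quat -> 'M[rat]_2) : Prop :=
  (forall x, inA p x -> inM2D p (phi x)) /\
      (forall x y, inA p x -> inA p y -> phi x = phi y -> x = y) /\
      (forall M, inM2D p M -> exists2 x, inA p x & phi x = M) /\
      (forall x y, inA p x -> inA p y -> phi (qadd x y) = phi x + phi y) /\
      (forall x y, inA p x -> inA p y -> phi (qmul x y) = phi x * phi y) /\
  phi qone = 1.

(* Main.v *)
Require Import Defs.
From HB Require Import structures.

From mathcomp Require Import all_boot all_order all_algebra.
From mathcomp Require Import zify ring lra.
Set Implicit Arguments. Unset Strict Implicit. Unset Printing Implicit Defensive.

Section NT.
Variable p : nat.
Hypothesis hp : prime p.
Hypothesis hodd : odd p.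

Let h := p./2.
Let ph : p = h.*2.+1.
Proof. by rewrite -[LHS]odd_double_half hodd add1n. Qed.

Lemma sq_inj_aux x y : y <= x -> x <= h -> p %| x ^ 2 - y ^ 2 -> x = y.
Proof.
move=> yx xh; rewrite subn_sqr Euclid_dvdM // => /orP[] hd.
  case: (posnP (x - y)) => [e|pos]; first lia.
  have := dvdn_leq pos hd; lia.
case: (posnP (x + y)) => [e|pos]; first lia.
have := dvdn_leq pos hd; lia.
Qed.

Lemma sq_inj x y : x <= h -> y <= h -> x ^ 2 = y ^ 2 %[mod p] -> x = y.
Proof.
move=> xh yh; case: (leqP y x) => [yx|xy] /eqP.
  by rewrite eqn_mod_dvd ?leq_exp2r // => /sq_inj_aux; apply.
rewrite eq_sym eqn_mod_dvd ?leq_exp2r ?(ltnW xy) // => /sq_inj_aux H.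
by apply/esym/H => //; apply: ltnW.
Qed.

Lemma sum2sq_modp t : exists x y, (x ^ 2 + y ^ 2) %% p = t %% p.
Proof.
have p0 : 0 < p by apply: prime_gt0.
pose f1 (x : 'I_h.+1) : 'I_p := Ordinal (ltn_pmod (x ^ 2) p0).
pose f2 (x : 'I_h.+1) : 'I_p := Ordinal (ltn_pmod (t + p.-1 * x ^ 2) p0).
have i1 : injective f1.
  move=> x y /(congr1 val) /= e; apply/val_inj/sq_inj => //; rewrite -ltnS; exact: ltn_ord.
have i2 : injective f2.
  move=> x y /(congr1 val) /= /eqP; rewrite eqn_modDl.
  have hx : x <= h by rewrite -ltnS; exact: ltn_ord.
  have hy : y <= h by rewrite -ltnS; exact: ltn_ord.
  have p2 := prime_gt1 hp.
  have cp : ~~ (p %| p.-1) by apply/negP => /dvdn_leq; lia.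
  move=> e; apply/val_inj.
  case: (leqP y x) => [yx|xy]; move: e.
    rewrite eqn_mod_dvd ?leq_mul ?leq_exp2r // -mulnBr Euclid_dvdM // (negPf cp) /=.
    by move/sq_inj_aux; apply.
  rewrite eq_sym eqn_mod_dvd ?leq_mul ?leq_exp2r ?(ltnW xy) // -mulnBr Euclid_dvdM // (negPf cp) /=.
  by move/sq_inj_aux => H; apply/esym/H => //; apply: ltnW.
set A := [set f1 x | x in 'I_h.+1]; set B := [set f2 x | x in 'I_h.+1].
have cA : #|A| = h.+1 by rewrite card_imset // card_ord.
have cB : #|B| = h.+1 by rewrite card_imset // card_ord.
have cU : #|A :|: B| <= p by rewrite -[X in _ <= X]card_ord max_card.
have : A :&: B != set0.
  rewrite -card_gt0; have := cardsUI A B; rewrite cA cB; lia.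
case/set0Pn => z; rewrite inE => /andP[/imsetP[x _ ->] /imsetP[y _ e]].
exists x, y; move/(congr1 val): e => /= e.
rewrite -modnDml e modnDml -addnA.
have -> : p.-1 * y ^ 2 + y ^ 2 = y ^ 2 * p.
  by rewrite mulnC -{2}(muln1 (y ^ 2)) -mulnDr addn1 prednK.
by rewrite addnC modnMDl.
Qed.

Import Order.TTheory GRing.Theory Num.Theory.
Local Open Scope ring_scope.

Lemma sum2sq_modpZ (T : int) : exists x y : int, (p%:Z %| x ^+ 2 + y ^+ 2 - T)%Z.
Proof.
have p0 : (0 < p%:Z) by rewrite ltz_nat prime_gt0.
set t := `|(T %% p%:Z)%Z|%N.
have et : (t : int) = (T %% p%:Z)%Z by rewrite gez0_abs // modz_ge0 // gt_eqF.
have tp : (t < p)%N by rewrite -ltz_nat et ltz_pmod.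
have [x [y e]] := sum2sq_modp t.
exists x, y; rewrite -eqz_mod_dvd; apply/eqP.
have E : (x%:Z)^+2 + (y%:Z)^+2 = ((x ^ 2 + y ^ 2)%N : int) by rewrite !expr2 -!PoszM -PoszD !mulnn.
rewrite E -[in RHS]et.
have -> : (((x ^ 2 + y ^ 2)%N : int) %% p%:Z)%Z = ((x ^ 2 + y ^ 2) %% p)%N by rewrite modz_nat.
by rewrite e modn_small.
Qed.

Lemma ndvd2c (c : int) : ~~ (p%:Z %| c)%Z -> coprimez p%:Z (2 * c).
Proof.
move=> hc; rewrite coprimezE abszM /= prime_coprime // Euclid_dvdM // negb_or.
apply/andP; split; last by move: hc; rewrite dvdzE.
apply/negP => /dvdn_leq => /(_ isT) h2.
have p2 := prime_gt1 hp.
have : p = 2%N by lia.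
by move=> e; move: hodd; rewrite e.
Qed.

Lemma hensel (R c0 : int) : ~~ (p%:Z %| c0)%Z -> (p%:Z %| c0 ^+ 2 - R)%Z ->
  forall n, exists c : int, ~~ (p%:Z %| c)%Z /\ (p%:Z ^+ n.+1 %| c ^+ 2 - R)%Z.
Proof.
move=> h0 d0; elim => [|k [c [hc dc]]]; first by exists c0; rewrite expr1.
have [[u1 u2] /= eu] := coprimezP _ _ (ndvd2c hc).
case/dvdzP: dc => t et.
set q := p%:Z ^+ k.+1.
set m := - u2 * t.
exists (c + m * q); split.
  apply/negP => /dvdzP [a ea]; move/negP: hc; apply; apply/dvdzP.
  exists (a - m * p%:Z ^+ k); rewrite mulrBl -mulrA -exprSr -ea /q; ring.
apply/dvdzP; exists (t * u1 + m ^+ 2 * p%:Z ^+ k).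
have -> : (c + m * q) ^+ 2 - R = (c ^+ 2 - R) + 2 * c * m * q + m ^+ 2 * q ^+ 2 by ring.
have E1 : t = t * (u1 * p%:Z + u2 * (2 * c)) by rewrite eu mulr1.
rewrite et /m /q {1}E1 !exprS; ring.
Qed.

Lemma sum2sq_hensel (T : int) : ~~ (p%:Z %| T)%Z -> forall n,
  exists x y : int, ~~ (p%:Z %| x)%Z /\ (p%:Z ^+ n %| x ^+ 2 + y ^+ 2 - T)%Z.
Proof.
move=> hT n.
have [x [y dxy]] := sum2sq_modpZ T.
have [hx|hx] := boolP (p%:Z %| x)%Z; last first.
  have dx : (p%:Z %| x ^+ 2 - (T - y ^+ 2))%Z by rewrite opprB addrA.
  have [c [hc dc]] := hensel hx dx n.
  exists c, y; split => //.
  move: dc; rewrite opprB addrA exprS => dc; apply: dvdz_trans dc; by rewrite exprS; apply: dvdz_mull; apply: dvdzz.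
have hy : ~~ (p%:Z %| y)%Z.
  apply/negP => hy; move/negP: hT; apply.
  have -> : T = x * x + y * y - (x ^+ 2 + y ^+ 2 - T) by ring.
  by apply: rpredB => //; apply: rpredD; apply: dvdz_mull.
have dy : (p%:Z %| y ^+ 2 - (T - x ^+ 2))%Z by rewrite opprB addrA (addrC (y ^+ 2)).
have [c [hc dc]] := hensel hy dy n.
exists c, x; split => //.
move: dc; rewrite opprB addrA => dc; apply: dvdz_trans dc; by rewrite exprS; apply: dvdz_mull; apply: dvdzz.
Qed.

Lemma sum3sq (T : int) n : exists x y z : int,
  ~~ (p%:Z %| x)%Z /\ (p%:Z ^+ n %| x ^+ 2 + y ^+ 2 + z ^+ 2 - T)%Z.
Proof.
have [hT|hT] := boolP (p%:Z %| T)%Z.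
  have hT1 : ~~ (p%:Z %| T - 1)%Z.
    apply/negP => hh; have : (p%:Z %| T - (T - 1))%Z by apply: rpredB.
    rewrite opprB addrA addrAC subrr add0r dvdzE /= dvdn1 => /eqP e.
    by move: hp; rewrite e.
  have [x [y [hx d]]] := sum2sq_hensel hT1 n.
  by exists x, y, 1; split => //; rewrite expr1n -addrA -opprB.
have [x [y [hx d]]] := sum2sq_hensel hT n.
by exists x, y, 0; rewrite expr0n addr0.
Qed.

End NT.

Import Order.TTheory GRing.Theory Num.Theory.
Local Open Scope ring_scope.

Section D.
Variable p : nat.
Hypothesis hp : prime p.

Lemma inZlocP x : inZloc p x <-> exists n d : int, ~~ (p%:Z %| d)%Z /\ x = n%:~R / d%:~R.
Proof.
split.
  move=> h; exists (numq x), (denq x); split => //.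
  by rewrite divq_num_den.
move=> [n [d [hd ->]]]; rewrite /inZloc.
case: divqP hd => [_|k y kne]; first by rewrite dvdz0.
apply: contra => /dvdz_mull //.
Qed.

Lemma ndvdM (a b : int) : ~~ (p%:Z %| a)%Z -> ~~ (p%:Z %| b)%Z -> ~~ (p%:Z %| a * b)%Z.
Proof. by rewrite !dvdzE abszM Euclid_dvdM // => /negPf-> /negPf->. Qed.

Lemma ndvd_ne0 (a : int) : ~~ (p%:Z %| a)%Z -> a%:~R != 0 :> rat.
Proof. by apply: contra; rewrite intr_eq0 => /eqP->; rewrite dvdz0. Qed.

Lemma DD x y : inZloc p x -> inZloc p y -> inZloc p (x + y).
Proof.
move=> /inZlocP[n1 [d1 [h1 ->]]] /inZlocP[n2 [d2 [h2 ->]]]; apply/inZlocP.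
exists (n1 * d2 + n2 * d1), (d1 * d2); split; first exact: ndvdM.
have := ndvd_ne0 h1; have := ndvd_ne0 h2; rewrite !rmorphD !rmorphM /= => ??.
by field; apply/andP.
Qed.

Lemma DM x y : inZloc p x -> inZloc p y -> inZloc p (x * y).
Proof.
move=> /inZlocP[n1 [d1 [h1 ->]]] /inZlocP[n2 [d2 [h2 ->]]]; apply/inZlocP.
exists (n1 * n2), (d1 * d2); split; first exact: ndvdM.
have := ndvd_ne0 h1; have := ndvd_ne0 h2; rewrite !rmorphM /= => ??.
by field; apply/andP.
Qed.

Lemma DZ (n : int) : inZloc p n%:~R.
Proof.
apply/inZlocP; exists n, 1; split; last by rewrite divr1.
by rewrite dvdzE /= dvdn1; apply/eqP => e; move: hp; rewrite e.
Qed.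

Lemma DN x : inZloc p x -> inZloc p (- x).
Proof. by move=> h; rewrite -mulN1r; apply: DM => //; apply: (DZ (-1)). Qed.

Lemma DB x y : inZloc p x -> inZloc p y -> inZloc p (x - y).
Proof. by move=> hx hy; apply: DD => //; apply: DN. Qed.

Lemma D0 : inZloc p 0. Proof. exact: (DZ 0). Qed.
Lemma D1 : inZloc p 1. Proof. exact: (DZ 1). Qed.

Lemma DinvZ (d : int) : ~~ (p%:Z %| d)%Z -> inZloc p (d%:~R)^-1.
Proof. by move=> h; apply/inZlocP; exists 1, d; split => //; rewrite div1r. Qed.

Definition Div (g b : rat) := inZloc p (b / g) /\ b = g * (b / g).

Lemma Div_total x y : Div x y \/ Div y x.
Proof.
have [->|x0] := eqVneq x 0.
  by right; split; rewrite mul0r ?mulr0 //; apply: D0.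
have [->|y0] := eqVneq y 0.
  by left; split; rewrite mul0r ?mulr0 //; apply: D0.
case hr: (inZloc p (y / x)).
  by left; split => //; field.
right; split; last by field.
have -> : x / y = (y / x)^-1 by rewrite invf_div.
move: hr; set r := y / x => hr.
rewrite -[r]divq_num_den invf_div; apply/inZlocP.
exists (denq r), (numq r); split => //.
move: hr; rewrite /inZloc => /negbFE hd.
apply/negP => hn.
have := coprime_num_den r; rewrite /coprime => /eqP hg.
have : (p %| gcdn `|numq r| `|denq r|)%N by rewrite dvdn_gcd; move: hn hd; rewrite !dvdzE /= => -> ->.
by rewrite hg dvdn1 => /eqP e; move: hp; rewrite e.
Qed.

Lemma Div_refl x : Div x x.
Proof.
have [->|x0] := eqVneq x 0; first by split; rewrite ?mul0r //; apply: D0.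
by split; rewrite divff // ?mulr1 //; apply: D1.
Qed.

Lemma Div_trans h g b : Div h g -> Div g b -> Div h b.
Proof.
move=> [h1 e1] [h2 e2].
have [h0|h0] := eqVneq h 0.
  have g0 : g = 0 by rewrite e1 h0 mul0r.
  have b0 : b = 0 by rewrite e2 g0 mul0r.
  by rewrite h0 b0; split; rewrite ?mul0r //; apply: D0.
rewrite /Div.
have -> : b / h = (g / h) * (b / g).
  have [g0|g0] := eqVneq g 0.
    have b0 : b = 0 by rewrite e2 g0 mul0r.
    by rewrite b0 g0 !mul0r.
  by field; apply/andP.
split; first exact: DM.
by rewrite mulrA -e1 -e2.
Qed.

Lemma Div_in g b : inZloc p g -> Div g b -> inZloc p b.
Proof. by move=> hg [hb ->]; apply: DM. Qed.

Lemma Div_min3 b c d : exists g, [/\ g = b \/ g = c \/ g = d, Div g b, Div g c & Div g d].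
Proof.
have [bc|cb] := Div_total b c.
  have [bd|db] := Div_total b d.
    by exists b; split; [left| apply: Div_refl| |].
  exists d; split; [right; right| | |apply: Div_refl] => //.
  exact: Div_trans bc.
have [cd|dc] := Div_total c d.
  by exists c; split; [right; left| | apply: Div_refl|].
exists d; split; [right; right| | |apply: Div_refl] => //.
  exact: Div_trans cb.
Qed.

Definition PE (a s : rat) (l : seq rat) : rat * rat :=
  foldr (fun c pq => (pq.1 * a + s * pq.2 + c, pq.1 + a * pq.2)) (0,0) l.

Lemma PE_int a s l dd : inZloc p a -> inZloc p s -> (forall c, c \in l -> inZloc p (dd * c)) ->
  inZloc p (dd * (PE a s l).1) /\ inZloc p (dd * (PE a s l).2).
Proof.
move=> ha hs; elim: l => [|c l IH] hl /=; first by rewrite mulr0; split; apply: D0.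
have [h1 h2] := IH (fun x (hx : x \in l) => hl x (ltac:(by rewrite inE hx orbT))).
have hc := hl c (mem_head _ _).
split.
  rewrite mulrDr mulrDr; apply: DD => //; apply: DD.
    by rewrite mulrA; apply: DM.
  by rewrite mulrCA; apply: DM.
by rewrite mulrDr mulrCA; apply: DD => //; apply: DM.
Qed.

Lemma PE_lip a s s1 l dd : inZloc p a -> inZloc p s -> inZloc p s1 ->
  (forall c, c \in l -> inZloc p (dd * c)) ->
  (exists2 y, inZloc p y & dd * ((PE a s l).1 - (PE a s1 l).1) = (s - s1) * y) /\
  (exists2 y, inZloc p y & dd * ((PE a s l).2 - (PE a s1 l).2) = (s - s1) * y).
Proof.
move=> ha hs hs1; elim: l => [|c l IH] hl /=.
  by split; exists 0; rewrite ?subrr ?mulr0 //; apply: D0.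
have hl' : forall x, x \in l -> inZloc p (dd * x) by move=> x hx; apply: hl; rewrite inE hx orbT.
have [[y1 hy1 e1] [y2 hy2 e2]] := IH hl'.
have [_ hq1] := PE_int ha hs1 hl'.
split.
  exists (a * y1 + s * y2 + dd * (PE a s1 l).2).
    by apply: DD => //; apply: DD; apply: DM.
  transitivity (a * (dd * ((PE a s l).1 - (PE a s1 l).1)) +
     s * (dd * ((PE a s l).2 - (PE a s1 l).2)) + (s - s1) * (dd * (PE a s1 l).2)).
    ring.
  rewrite e1 e2; ring.
exists (y1 + a * y2); first by apply: DD => //; apply: DM.
transitivity (dd * ((PE a s l).1 - (PE a s1 l).1) + a * (dd * ((PE a s l).2 - (PE a s1 l).2))).
  ring.
rewrite e1 e2; ring.
Qed.

Lemma dd_exists (l : seq rat) : exists2 dd : nat, (0 < dd)%N & forall c, c \in l -> inZloc p (dd%:R * c).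
Proof.
elim: l => [|c l [dd hd hl]]; first by exists 1%N.
exists (`|denq c| * dd)%N; first by rewrite muln_gt0 hd andbT absz_gt0 denq_neq0.
have E : (`|denq c|%N)%:R = (denq c)%:~R :> rat by rewrite -absz_denq.
move=> x; rewrite inE => /orP[/eqP->|hx]; rewrite natrM E.
  by rewrite mulrAC (mulrC _ c) -numqE; apply: DM; [exact: DZ| exact: (DZ dd%:Z)].
by rewrite -mulrA; apply: DM; [apply: DZ| apply: hl].
Qed.

Lemma pn_exists (dd : nat) : (0 < dd)%N -> exists n : nat, inZloc p ((p ^ n)%:R / dd%:R).
Proof.
move=> hd; have [m cm em] := pfactor_coprime hp hd.
exists (logn p dd); rewrite {2}em natrM.
have hp0 : (p ^ logn p dd)%:R != 0 :> rat by rewrite pnatr_eq0 -lt0n expn_gt0 prime_gt0.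
have hm0 : m%:R != 0 :> rat.
  rewrite pnatr_eq0; apply/eqP => m0; move: cm; rewrite m0 /coprime gcdn0 => /eqP e.
  by move: hp; rewrite e.
rewrite invfM mulrCA divff // mulr1.
have -> : (m%:R : rat) = (m%:Z)%:~R by [].
apply: DinvZ; rewrite dvdzE /=; by rewrite -prime_coprime.
Qed.

End D.
Lemma qeval_PE f a b c d :
  qeval f (Quat a b c d) =
  let pq := PE a (-(b^+2 + c^+2 + d^+2)) (polyseq f) in
  Quat pq.1 (pq.2 * b) (pq.2 * c) (pq.2 * d).
Proof.
rewrite /qeval /=; elim: (polyseq f) => [|x l IH] /=.
  by rewrite /qzero /qconst !mul0r.
rewrite IH /qadd /qmul /qconst /=; congr Quat; ring.
Qed.

Definition mxa (M : 'M[rat]_2) := (M 0 0 + M 1 1) / 2.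
Definition mxs (M : 'M[rat]_2) := (M 0 0 - mxa M)^+2 + M 0 1 * M 1 0.

Lemma hmx_PE f (M : 'M[rat]_2) :
  horner_mx M f =
  let pq := PE (mxa M) (mxs M) (polyseq f) in
  \matrix_(i, j) ((i == j)%:R * pq.1 + pq.2 * (M i j - (i == j)%:R * mxa M)).
Proof.
rewrite -{1}[f]polyseqK /=; elim: (polyseq f) => [|x l IH] /=.
  rewrite rmorph0; apply/matrixP => i j; rewrite !mxE; ring.
rewrite cons_poly_def rmorphD rmorphM /= horner_mx_X horner_mx_C IH.
apply/matrixP => i j; rewrite !mxE big_ord_recl big_ord1 !mxE /mxs /mxa.
have E0 : forall H : (0 < 2)%N, Ordinal H = 0 by move=> H; apply/val_inj.
have E1 : forall H : (1 < 2)%N, Ordinal H = 1 by move=> H; apply/val_inj.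
have L : lift ord0 ord0 = 1 :> 'I_2 by apply/val_inj.
have O : ord0 = 0 :> 'I_2 by apply/val_inj.
case: i => [[|[|i]] Hi] //; case: j => [[|[|j]] Hj] //=;
  rewrite ?E0 ?E1 L O mulr1n; by field.
Qed.

Section Main.
Variable p : nat.
Hypothesis hp : prime p.
Hypothesis hodd : odd p.
Let DD := DD hp. Let DM := DM hp. Let DN := DN hp. Let DB := DB hp. Let DZ := DZ hp.
Let D0 := D0 hp. Let D1 := D1 hp.

Lemma sum3sqD s n : inZloc p s -> exists u1 u2 u3 t,
  [/\ inZloc p u1, inZloc p u2, inZloc p u3 & u1 != 0] /\ [/\ inZloc p u1^-1, inZloc p t &
      s + u1 ^+ 2 + u2 ^+ 2 + u3 ^+ 2 = (p ^ n)%:R * t].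
Proof.
move=> hs; have hd : ~~ (p%:Z %| denq s)%Z by [].
have [x [y [z [hx dx]]]] := sum3sq hp hodd (- numq s * denq s) n.
case/dvdzP: dx => w ew.
have dne := ndvd_ne0 hd.
have xne : x%:~R != 0 :> rat.
  by apply: contra hx; rewrite intr_eq0 => /eqP->; rewrite dvdz0.
exists (x%:~R / (denq s)%:~R), (y%:~R / (denq s)%:~R), (z%:~R / (denq s)%:~R),
       (w%:~R / (denq s)%:~R ^+ 2).
split; split.
- by apply/inZlocP; exists x, (denq s).
- by apply/inZlocP; exists y, (denq s).
- by apply/inZlocP; exists z, (denq s).
- by rewrite mulf_neq0 // invr_eq0.
- by rewrite invf_div; apply/inZlocP; exists (denq s), x.
- apply/inZlocP; exists w, (denq s ^+ 2); split; last by rewrite rmorphXn.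
  by rewrite expr2; apply: ndvdM.
have E : (x ^+ 2 + y ^+ 2 + z ^+ 2)%:~R = (- numq s * denq s + w * (p%:Z ^+ n))%:~R :> rat.
  by congr intmul; rewrite -ew; ring.
move: E; rewrite !rmorphD !rmorphM !rmorphXn /= rmorphN /= => E.
rewrite -[X in X + _ + _ + _ = _]divq_num_den.
have Ep : (p%:Z)%:~R = p%:R :> rat by [].
rewrite Ep in E.
transitivity ((((numq s)%:~R : rat) * (denq s)%:~R + (x%:~R * x%:~R + y%:~R * y%:~R + z%:~R * z%:~R)) / (denq s)%:~R ^+ 2).
  by field.
by rewrite E; field.
Qed.


Lemma two_inv : inZloc p (2 : rat)^-1.
Proof.
have -> : (2 : rat) = (2%:Z)%:~R by [].
apply: DinvZ => //; rewrite dvdzE /=; apply/negP => /dvdn_leq h.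
have p2 := prime_gt1 hp.
have e : p = 2%N by lia.
by move: hodd; rewrite e.
Qed.

Lemma ord2_cases (P : 'I_2 -> 'I_2 -> Prop) :
  P 0 0 -> P 0 1 -> P 1 0 -> P 1 1 -> forall i j, P i j.
Proof.
move=> h00 h01 h10 h11 i j.
have E0 : forall H : (0 < 2)%N, Ordinal H = 0 by move=> H; apply/val_inj.
have E1 : forall H : (1 < 2)%N, Ordinal H = 1 by move=> H; apply/val_inj.
by case: i => [[|[|i]] Hi] //; case: j => [[|[|j]] Hj] //; rewrite ?E0 ?E1.
Qed.

Lemma fwd f : IntQ_A p f -> IntQ_M2D p f.
Proof.
move=> hA M hM.
have hMe : forall i j, inZloc p (M i j).
  by move=> i j; move/forallP: hM => /(_ i) /forallP; apply.
set a := mxa M.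
have ha : inZloc p a by rewrite /a /mxa; apply: DM; [apply: DD|apply: two_inv].
set x := M 0 0 - a; set y := M 0 1; set z := M 1 0.
have hx : inZloc p x by apply: DB.
have [g [gin [hxg ex] [hyg ey] [hzg ez]]] := Div_min3 hp x y z.
have hg : inZloc p g by case: gin => [->|[->|->]] //; apply: hMe.
set s := (x / g) ^+ 2 + (y / g) * (z / g).
have hs : inZloc p s by apply: DD; [rewrite expr2|]; apply: DM.
have es : mxs M = g ^+ 2 * s.
  rewrite /mxs -/a -/x -/y -/z /s {1}ex {1}ey {1}ez; ring.
have [dd dd0 hdd] := dd_exists hp (polyseq f).
have [n hn] := pn_exists hp dd0.
have [u1 [u2 [u3 [t [[hu1 hu2 hu3 u1ne] [hu1i ht et]]]]]] := sum3sqD n hs.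
set s1 := - ((g * u1) ^+ 2 + (g * u2) ^+ 2 + (g * u3) ^+ 2).
have hs1 : inZloc p s1.
  by apply: DN; rewrite !expr2; apply: DD; [apply: DD|]; apply: DM; apply: DM.
have hq := hA (Quat a (g * u1) (g * u2) (g * u3)).
have := hq (ltac:(by apply/and4P; split => //=; apply: DM)).
rewrite qeval_PE /= -/s1 => /and4P [hP1 hQ1 _ _].
set P1 := (PE a s1 (polyseq f)).1 in hP1 hQ1 *.
set Q1 := (PE a s1 (polyseq f)).2 in hP1 hQ1 *.
have hQg1 : inZloc p (Q1 * g).
  have -> : Q1 * g = Q1 * (g * u1) * u1^-1 by field.
  exact: DM.
have hsM : inZloc p (mxs M) by rewrite es expr2; apply: DM => //; apply: DM.
have [[y1 hy1 e1] [y2 hy2 e2]] := PE_lip hp ha hsM hs1 hdd.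
have ediff : mxs M - s1 = g ^+ 2 * t * (p ^ n)%:R.
  have -> : mxs M - s1 = g ^+ 2 * (s + u1 ^+ 2 + u2 ^+ 2 + u3 ^+ 2) by rewrite es /s1; ring.
  by rewrite et; ring.
have ddne : dd%:R != 0 :> rat by rewrite pnatr_eq0 -lt0n.
set P := (PE a (mxs M) (polyseq f)).1 in e1 *.
set Q := (PE a (mxs M) (polyseq f)).2 in e2 *.
have hP : inZloc p P.
  have -> : P = P1 + g ^+ 2 * t * y1 * ((p ^ n)%:R / dd%:R).
    have eP : P = P1 + (mxs M - s1) * y1 / dd%:R by rewrite -e1; field.
    by rewrite eP ediff; field.
  by apply: DD => //; apply: DM => //; apply: DM => //; apply: DM => //; rewrite expr2; apply: DM.
have hQg : inZloc p (Q * g).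
  have -> : Q * g = Q1 * g + g ^+ 3 * t * y2 * ((p ^ n)%:R / dd%:R).
    have eQ : Q = Q1 + (mxs M - s1) * y2 / dd%:R by rewrite -e2; field.
    by rewrite eQ ediff; field.
  by apply: DD => //; apply: DM => //; apply: DM => //; apply: DM => //; rewrite !exprS expr0 mulr1; apply: DM => //; apply: DM.
have e11 : M 1 1 - a = - x by rewrite /x /a /mxa; field.
rewrite hmx_PE /= -/a -/P -/Q.
apply/forallP => i; apply/forallP => j; rewrite mxE; move: i j.
apply: ord2_cases => /=.
- by rewrite !mul1r -/x {1}ex mulrA; apply: DD => //; apply: DM.
- by rewrite mul0r add0r mul0r subr0 -/y {1}ey mulrA; apply: DM.
- by rewrite mul0r add0r mul0r subr0 -/z {1}ez mulrA; apply: DM.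
- by rewrite !mul1r e11 {1}ex mulrN [Q * _]mulrA; apply: DD => //; apply: DN; apply: DM.
Qed.

Lemma bwd f : IntQ_M2D p f -> IntQ_A p f.
Proof.
move=> hM [a b c d] /and4P [ha hb hc hd].
have [g [gin [hbg eb] [hcg ec] [hdg ed]]] := Div_min3 hp b c d.
have hg : inZloc p g by case: gin => [->|[->|->]].
set z := - (b * (b / g) + c * (c / g) + d * (d / g)).
have hz : inZloc p z by apply: DN; apply: DD; [apply: DD|]; apply: DM.
pose M : 'M[rat]_2 := \matrix_(i, j) if (i : nat) == 0%N then (if (j : nat) == 0%N then a else g)
   else (if (j : nat) == 0%N then z else a).
have hMD : inM2D p M.
  by apply/forallP => i; apply/forallP => j; rewrite mxE; case: ifP; case: ifP.
have hf := hM M hMD.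
have eMa : mxa M = a by rewrite /mxa !mxE /=; field.
have eMs : mxs M = - (b ^+ 2 + c ^+ 2 + d ^+ 2).
  rewrite /mxs eMa !mxE /= /z.
  transitivity (- (b * (g * (b / g)) + c * (g * (c / g)) + d * (g * (d / g)))); first by ring.
  by rewrite -eb -ec -ed; ring.
move: hf; rewrite /inM2D hmx_PE /= eMa eMs.
set P := (PE a _ (polyseq f)).1; set Q := (PE a _ (polyseq f)).2.
move=> /forallP hf.
have hP : inZloc p P.
  by move: (hf 0) => /forallP /(_ 0); rewrite !mxE /= !mul1r subrr mulr0 addr0.
have hQg : inZloc p (Q * g).
  by move: (hf 0) => /forallP /(_ 1); rewrite !mxE /= !mul0r add0r subr0.
rewrite /inA qeval_PE /= -/P -/Q; apply/and4P; split => //.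
- by rewrite {1}eb mulrA; apply: DM.
- by rewrite {1}ec mulrA; apply: DM.
- by rewrite {1}ed mulrA; apply: DM.
Qed.

End Main.

Definition qn (q : quat) := qa q ^+ 2 + qb q ^+ 2 + qc q ^+ 2 + qd q ^+ 2.

Lemma qn_mul x y : qn (qmul x y) = qn x * qn y.
Proof. case: x => a b c d; case: y => a' b' c' d'; rewrite /qn /qmul /=; ring. Qed.

Lemma qn_eq0 q : qn q = 0 -> q = qzero.
Proof.
case: q => a b c d; rewrite /qn /= => e.
have ha : a = 0 by nra.
have hb : b = 0 by nra.
have hc : c = 0 by nra.
have hd : d = 0 by nra.
by rewrite /qzero /qconst ha hb hc hd.
Qed.

Lemma no_iso p (hp : prime p) : ~ (exists phi : quat -> 'M[rat]_2, A_M2D_ring_iso p phi).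
Proof.
move=> [phi [hin [hinj [hsurj [hadd [hmul h1]]]]]].
have hz : inA p qzero by apply/and4P; split; apply: D0.
have phi0 : phi qzero = 0.
  have e := hadd qzero qzero hz hz.
  have ez : qadd qzero qzero = qzero by rewrite /qadd /qzero /qconst /= addr0.
  rewrite ez in e.
  have : phi qzero + 0 = phi qzero + phi qzero by rewrite addr0.
  by move/addrI => <-.
have hdelta : forall i j : 'I_2, inM2D p (delta_mx i j).
  move=> i j; apply/forallP => k; apply/forallP => l; rewrite mxE.
  by case: (_ && _); [apply: D1| apply: D0].
have [x hx ex] := hsurj _ (hdelta 0 0).
have [y hy ey] := hsurj _ (hdelta 1 1).
have hxy : inA p (qmul x y).
  move/and4P: hx => [? ? ? ?]; move/and4P: hy => [? ? ? ?].
  by apply/and4P; split => /=; repeat first [assumption | apply: (DD hp) | apply: (DN hp) | apply: (DM hp)].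
have e0 : phi (qmul x y) = phi qzero.
  by rewrite hmul // ex ey phi0 -mulmxE mul_delta_mx_cond.
have exy := hinj _ _ hxy hz e0.
have : qn x * qn y = 0 by rewrite -qn_mul exy /qn /qzero /qconst /=; ring.
move/eqP; rewrite mulf_eq0 => /orP [] /eqP /qn_eq0 e.
  by move: ex; rewrite e phi0 => /matrixP /(_ 0 0); rewrite !mxE.
by move: ey; rewrite e phi0 => /matrixP /(_ 1 1); rewrite !mxE.
Qed.

Theorem mainTheorem13 (p : nat) (hp : prime p) (hodd : odd p) :
  (forall f : {poly rat}, IntQ_A p f <-> IntQ_M2D p f) /\
  ~ (exists phi : quat -> 'M[rat]_2, A_M2D_ring_iso p phi).
Proof.
split; last exact: no_iso.
by move=> f; split; [apply: fwd | apply: bwd].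
Qed.
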